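(* Let $X$ be a real Banach space and $X_1=X\setminus B_X$. The following statements are equivalent. (1) $X$ is UR. (2) $\sup_{x,x'\in X_1}\left|r(P_{S_X}(x,\frac1n),P_{S_X}(x',\frac1n))-\left\|\frac{x}{\|x\|}-\frac{x'}{\|x'\|}\right\|\right|\to0$. (3) $\sup_{x\in X_1}\mathrm{diam}(P_{S_X}(x,\frac1n))\to0$. (4) $P_{S_X}(x)=\{\frac{x}{\|x\|}\}$ for every $x\in X_1$ and $\sup_{x\in X_1}H(P_{S_X}(x,\frac1n),P_{S_X}(x))\to0$. (5) $S_X$ is uniformly strongly Chebyshev on $X_1$.
   Context: $B_X,S_X$ are the closed unit ball and unit sphere of $X$. For non-empty closed $A\subseteq X$, $x\in X$, $\delta\ge0$: $P_A(x,\delta)=\{y\in A:\|x-y\|\le\inf_{z\in A}\|x-z\|+\delta\}$, $P_A(x)=P_A(x,0)$. $A$ is uniformly strongly Chebyshev on $D$ if $P_A(x)$ is a singleton for every $x\in D$ and for every $\epsilon>0$ there is $\delta>0$ such that $P_A(x,\delta)\subseteq P_A(x)+\epsilon B_X$ for all $x\in D$. For non-empty bounded $A,B$: $r(A,B)=\sup\{\|a-b\|:a\in A,b\in B\}$, $H(A,B)=\inf\{r>0:A\subseteq B+rB_X,B\subseteq A+rB_X\}$. $X$ is UR if $\|x_n-y_n\|\to0$ whenever $(x_n),(y_n)\subseteq S_X$ with $\|\frac{x_n+y_n}{2}\|\to1$. *)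

(* Defs.v *)
From HB Require Import structures.
From mathcomp Require Import all_boot all_order all_algebra.
From mathcomp Require Import all_classical all_reals all_analysis.
Set Implicit Arguments. Unset Strict Implicit. Unset Printing Implicit Defensive.
Import Order.TTheory GRing.Theory Num.Theory.
Import numFieldNormedType.Exports.
Local Open Scope classical_set_scope.
Local Open Scope ring_scope.

Section Defs.
Context {R : realType} {X : normedModType R}.

Definition unit_ball : set X := [set x | `|x| <= 1].
Definition unit_sphere : set X := [set x | `|x| = 1].

Definition dist_set (A : set X) (x : X) : R := inf [set `|x - z| | z in A].

Definition Papprox (A : set X) (x : X) (delta : R) : set X :=
  [set y | A y /\ `|x - y| <= dist_set A x + delta].

Definition Pmetric (A : set X) (x : X) : set X := Papprox A x 0.

Definition enlarge (A : set X) (r : R) : set X :=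
  [set a + r *: b | a in A & b in unit_ball].

Definition unif_strongly_chebyshev (A D : set X) : Prop :=
  (forall x, D x -> exists a, Pmetric A x = [set a]) /\
  (forall eps : R, 0 < eps -> exists2 delta : R, 0 < delta &
     forall x, D x -> Papprox A x delta `<=` enlarge (Pmetric A x) eps).

Definition rsup (A B : set X) : R := sup [set `|a - b| | a in A & b in B].

Definition diam (A : set X) : R := sup [set `|a - b| | a in A & b in A].

Definition hausdorff (A B : set X) : R :=
  inf [set r : R | 0 < r /\ A `<=` enlarge B r /\ B `<=` enlarge A r].

Definition UR : Prop :=
  forall xn yn : nat -> X,
    (forall n, `|xn n| = 1) -> (forall n, `|yn n| = 1) ->
    (fun n => `|2^-1 *: (xn n + yn n)|) @ \oo --> (1 : R) ->
    (fun n => `|xn n - yn n|) @ \oo --> (0 : R).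

Definition X1 : set X := ~` unit_ball.

End Defs.

(* Main.v *)
Require Import Defs.
From HB Require Import structures.
From mathcomp Require Import all_boot all_order all_algebra.
From mathcomp Require Import all_classical all_reals all_analysis.
From mathcomp Require Import lra.
Import Order.TTheory GRing.Theory Num.Theory.
Import numFieldNormedType.Exports.
Local Open Scope classical_set_scope.
Local Open Scope ring_scope.

Section RealAux.
Variable R : realType.

Lemma sup_le_c (E : set R) c : 0 <= c -> (forall e, E e -> e <= c) -> sup E <= c.
Proof.
move=> c0 Ec; have [En|En] := pselect (E !=set0).
  by apply: ge_sup.
rewrite (_ : E = set0) ?sup0 //; apply/seteqP; split=> x // Ex.
by apply: En; exists x.
Qed.

Lemma le_sup_c (E : set R) c e : E e -> (forall e, E e -> e <= c) -> e <= sup E.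
Proof. by move=> Ee Ec; apply: sup_upper_bound => //; split; [exists e|exists c]. Qed.

Lemma sup_bnd0 (E : set R) c : 0 <= c -> (forall e, E e -> 0 <= e <= c) -> 0 <= sup E <= c.
Proof.
move=> c0 Ec; apply/andP; split; last by apply: sup_le_c => // e /Ec /andP[].
have [[e Ee]|En] := pselect (E !=set0).
  have /andP[e0 _] := Ec _ Ee.
  have Ec' : forall z, E z -> z <= c by move=> z /Ec /andP[].
  exact: le_trans e0 (le_sup_c _ _ _ Ee Ec').
rewrite (_ : E = set0) ?sup0 //; apply/seteqP; split=> x // Ex.
by apply: En; exists x.
Qed.

Lemma sup_bnd (E : set R) z0 c : E z0 -> (forall e, E e -> e <= c) -> z0 <= sup E <= c.
Proof.
move=> Ez Ec; apply/andP; split; first exact: le_sup_c _ _ _ Ez Ec.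
by apply: ge_sup => //; exists z0.
Qed.

Lemma inf_le_c (E : set R) r : E r -> (forall e, E e -> 0 <= e) -> 0 <= inf E <= r.
Proof.
move=> Er E0; apply/andP; split.
  by apply: lb_le_inf; [exists r | move=> e /E0].
by apply: ge_inf => //; exists 0 => e /E0.
Qed.

Lemma cvg0_of (f : nat -> R) :
  (forall e, 0 < e -> exists N, forall n, (N <= n)%N -> `|f n| <= e) -> f @ \oo --> 0.
Proof.
move=> H; apply/cvgr0Pnorm_le => e e0; have [N HN] := H e e0.
by exists N => // n /= /HN.
Qed.

Lemma cvg0_ex (f : nat -> R) : f @ \oo --> 0 ->
  forall e, 0 < e -> exists N, forall n, (N <= n)%N -> `|f n| < e.
Proof.
move=> /cvgrPdist_lt H e e0; have [N _ HN] := H e e0.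
by exists N => n Nn; have := HN n Nn; rewrite sub0r normrN.
Qed.

Lemma dn_small (e : R) : 0 < e -> exists N, forall n, (N <= n)%N -> n.+1%:R^-1 <= e.
Proof.
move=> e0; have [N _ HN] := near_infty_natSinv_lt (PosNum e0).
by exists N => n Nn; apply/ltW; apply: HN.
Qed.

Lemma dn_gt0 n : 0 < (n.+1%:R : R)^-1.
Proof. by rewrite invr_gt0 ltr0Sn. Qed.

End RealAux.
Arguments dn_small {R}.
Arguments dn_gt0 {R}.
Arguments cvg0_ex {R}.
Arguments cvg0_of {R}.
Arguments le_sup_c {R}.

Section Geo.
Variables (R : realType) (X : normedModType R).
Local Notation S := (@unit_sphere R X).
Local Notation w x := (`|x|^-1 *: x).

Lemma X1_gt1 (x : X) : X1 x -> 1 < `|x|.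
Proof. by move=> /negP; rewrite /unit_ball /= -ltNge. Qed.

Lemma gt1_X1 (x : X) : 1 < `|x| -> X1 x.
Proof. by rewrite /X1 /unit_ball /= ltNge => /negP. Qed.

Lemma norm_w (x : X) : x != 0 -> `|w x| = 1.
Proof.
move=> x0; rewrite normrZ ger0_norm ?invr_ge0 // mulVf //.
by rewrite normr_eq0.
Qed.

Lemma norm_xw (x : X) : 1 <= `|x| -> `|x - w x| = `|x| - 1.
Proof.
move=> x1; have x0 : `|x| != 0 by rewrite gt_eqF // (lt_le_trans ltr01).
rewrite -{1}(scale1r x) -scalerBl normrZ ger0_norm.
  by rewrite mulrBl mul1r mulVf.
by rewrite subr_ge0 invf_le1 // (lt_le_trans ltr01).
Qed.

Lemma dist_S (x : X) : 1 < `|x| -> dist_set S x = `|x| - 1.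
Proof.
move=> x1; have x0 : x != 0 by rewrite -normr_eq0 gt_eqF // (lt_trans ltr01).
rewrite /dist_set; apply/eqP; rewrite eq_le; apply/andP; split.
  apply: ge_inf; first by exists 0 => _ [z _ <-].
  by exists (w x); [rewrite /unit_sphere /= norm_w | rewrite norm_xw // ltW].
apply: lb_le_inf; first by exists `|x - w x|, (w x) => //; rewrite /unit_sphere /= norm_w.
move=> _ [z Sz <-]; rewrite lerBlDr.
have := ler_normD (x - z) z; rewrite subrK.
by rewrite /unit_sphere /= in Sz; rewrite Sz.
Qed.

Lemma PapproxE (x : X) d a : 1 < `|x| ->
  Papprox S x d a <-> (`|a| = 1 /\ `|x - a| <= `|x| - 1 + d).
Proof. by move=> x1; rewrite /Papprox /= dist_S. Qed.

Lemma Papprox_mono (x : X) d d' : d <= d' -> Papprox S x d `<=` Papprox S x d'.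
Proof.
move=> dd a [Sa h]; split => //; apply: le_trans h _; by rewrite lerD2l.
Qed.

Lemma key_ineq (x : X) d a : 1 < `|x| -> Papprox S x d a -> 2 - d <= `|w x + a|.
Proof.
move=> x1 /(PapproxE _ _ _ x1) [a1 h].
have x0 : `|x| != 0 by rewrite gt_eqF // (lt_trans ltr01).
have E1 : x + w x = (x - a) + (w x + a) by rewrite addrA addrAC subrK.
have E2 : `|x + w x| = `|x| + 1.
  rewrite -{1}(scale1r x) -scalerDl normrZ ger0_norm.
    by rewrite mulrDl mul1r mulVf.
  by rewrite addr_ge0 // invr_ge0.
have := ler_normD (x - a) (w x + a); rewrite -E1 E2.
move: h; set p := `|x - a|; set q := `|w x + a|; set t := `|x|.
move=> h1 h2; lra.
Qed.

Lemma w_in_P (x : X) d : 1 < `|x| -> 0 <= d -> Papprox S x d (w x).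
Proof.
move=> x1 d0; have x0 : x != 0 by rewrite -normr_eq0 gt_eqF // (lt_trans ltr01).
apply/PapproxE => //; split; first exact: norm_w.
rewrite norm_xw; [lra | exact: ltW].
Qed.

Lemma sum_in_P (u y : X) d : `|u| = 1 -> `|y| = 1 -> 1 < `|u + y| -> 2 - d <= `|u + y| ->
  Papprox S (u + y) d u /\ Papprox S (u + y) d y.
Proof.
move=> u1 y1 h1 h2; split; apply/PapproxE => //; split => //.
- by rewrite addrC addKr y1; lra.
- by rewrite addrK u1; lra.
Qed.

End Geo.
Arguments X1_gt1 {R X}.
Arguments gt1_X1 {R X}.
Arguments norm_w {R X}.
Arguments norm_xw {R X}.
Arguments dist_S {R X}.
Arguments PapproxE {R X}.
Arguments Papprox_mono {R X}.
Arguments key_ineq {R X}.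
Arguments w_in_P {R X}.
Arguments sum_in_P {R X}.

Section Mod.
Variables (R : realType) (X : normedModType R).
Local Notation S := (@unit_sphere R X).
Local Notation w x := (`|x|^-1 *: x).

Definition modUR := forall e : R, 0 < e -> exists2 d : R, 0 < d &
  forall u y : X, `|u| = 1 -> `|y| = 1 -> 2 - d <= `|u + y| -> `|u - y| <= e.

Lemma normS2 (a b : X) : `|a| = 1 -> `|b| = 1 -> `|a - b| <= 2.
Proof.
move=> a1 b1; apply: le_trans (ler_normB a b) _; rewrite a1 b1.
by [].
Qed.

Lemma UR_mod : @UR R X <-> modUR.
Proof.
split.
  move=> HUR e e0; apply: contrapT => Hn.
  have H : forall n : nat, exists uy : X * X, [/\ `|uy.1| = 1, `|uy.2| = 1,
      2 - n.+1%:R^-1 <= `|uy.1 + uy.2| & e < `|uy.1 - uy.2|].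
    move=> n; apply: contrapT => Hn2; apply: Hn; exists n.+1%:R^-1; first exact: dn_gt0.
    move=> u y u1 y1 h; rewrite leNgt; apply/negP => h2; apply: Hn2.
    by exists (u, y).
  have [f Hf] := choice H.
  have := HUR (fun n => (f n).1) (fun n => (f n).2).
  have /[swap] /[apply] : forall n, `|(f n).1| = 1 by move=> n; case: (Hf n).
  have /[swap] /[apply] : forall n, `|(f n).2| = 1 by move=> n; case: (Hf n).
  have /[swap] /[apply] : (fun n => `|2^-1 *: ((f n).1 + (f n).2)|) @ \oo --> (1 : R).
    apply/cvgrPdist_le => eps eps0.
    have [N HN] := dn_small _ eps0.
    exists N => // n /= Nn; have [h1 h2 h3 _] := Hf n.
    have h4 := HN n Nn.
    have h5 : `|(f n).1 + (f n).2| <= 2 by apply: le_trans (ler_normD _ _) _; rewrite h1 h2.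
    rewrite normrZ ger0_norm ?invr_ge0 //.
    move: h3 h4 h5; set q := `|_ + _|; set dn := _^-1 => h3 h4 h5.
    rewrite ler_norml; apply/andP; split; lra.
  move=> /cvg0_ex /(_ e e0) [N HN].
  have := HN N (leqnn N); case: (Hf N) => _ _ _ h.
  by rewrite ger0_norm // => h'; have := lt_trans h h'; rewrite ltxx.
move=> HM xn yn x1 y1 hc; apply: cvg0_of => e e0.
have [d d0 Hd] := HM e e0.
have [N _ HN] := (cvgrPdist_lt _ _).1 hc (d / 2) (divr_gt0 d0 (ltr0Sn _ 1)).
exists N => n Nn; rewrite normr_id; apply: Hd => //.
have := HN n Nn; rewrite normrZ ger0_norm ?invr_ge0 //.
rewrite ltr_norml => /andP[_ h]; move: h; set q := `|xn n + yn n| => h; lra.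
Qed.

Lemma close_w (HM : modUR) (e : R) : 0 < e -> exists2 d0 : R, 0 < d0 &
  forall (x : X) d a, 1 < `|x| -> d <= d0 -> Papprox S x d a -> `|a - w x| <= e.
Proof.
move=> e0; have [d0 d00 Hd] := HM e e0; exists d0 => // x d a x1 dd Pa.
have k := key_ineq _ _ _ x1 Pa.
have [a1 _] := (PapproxE _ _ _ x1).1 Pa.
have x0 : x != 0 by rewrite -normr_eq0 gt_eqF // (lt_trans ltr01).
rewrite distrC; apply: Hd => //; first exact: norm_w.
by apply: le_trans k; rewrite lerD2l lerN2.
Qed.

Lemma enlarge_of (A : set X) c r : 0 < r -> (forall z, A z -> `|z - c| <= r) ->
  A `<=` enlarge [set c] r.
Proof.
move=> r0 H z Az; exists c => //; exists (r^-1 *: (z - c)).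
  rewrite /unit_ball /= normrZ ger0_norm; last by rewrite invr_ge0 ltW.
  by rewrite -(ler_pM2l r0) mulrA mulfV ?gt_eqF // mul1r mulr1 H.
by rewrite scalerA mulfV ?gt_eqF // scale1r addrC subrK.
Qed.

Lemma enlarge_self (A : set X) r : A `<=` enlarge A r.
Proof.
move=> z Az; exists z => //; exists 0; last by rewrite scaler0 addr0.
by rewrite /unit_ball /= normr0.
Qed.

Lemma enlarge_single (c z : X) r : 0 <= r -> enlarge [set c] r z -> `|z - c| <= r.
Proof.
move=> r0 [a -> [b b1 <-]]; rewrite addrAC subrr add0r normrZ ger0_norm //.
by rewrite -{2}(mulr1 r) ler_wpM2l.
Qed.

Lemma Pmetric_eq (HM : modUR) (x : X) : 1 < `|x| -> Pmetric S x = [set w x].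
Proof.
move=> x1; apply/seteqP; split => a.
  move=> Pa; apply/eqP; rewrite /= -subr_eq0 -normr_eq0; apply/negPn/negP => hn.
  have hp : 0 < `|a - w x| by rewrite normr_gt0 -normr_eq0.
  have [d0 d00 Hd] := close_w HM _ (divr_gt0 hp (ltr0Sn _ 1)).
  have := Hd x 0 a x1 (ltW d00) Pa.
  set q := `|a - w x|; move: hp; rewrite -/q => hp; lra.
by move=> /= ->; apply: w_in_P.
Qed.

End Mod.
Arguments normS2 {R X}.
Arguments UR_mod {R X}.
Arguments close_w {R X}.
Arguments enlarge_of {R X}.
Arguments enlarge_self {R X}.
Arguments enlarge_single {R X}.
Arguments Pmetric_eq {R X}.

Section Items.
Variables (R : realType) (X : normedModType R).
Local Notation S := (@unit_sphere R X).
Local Notation w x := (`|x|^-1 *: x).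
Local Notation d n := ((n.+1%:R : R)^-1).

Lemma half_gt0 (e : R) : 0 < e -> 0 < e / 2.
Proof. by move=> e0; apply: divr_gt0 => //; apply: ltr0Sn. Qed.

Lemma item3_fwd (HM : @modUR R X) :
  (fun n => sup [set diam (Papprox S x (d n)) | x in X1]) @ \oo --> (0 : R).
Proof.
apply: cvg0_of => e e0.
have [d0 d00 Hd] := close_w HM _ (half_gt0 _ e0).
have [N HN] := dn_small _ d00.
exists N => n Nn.
have hs : 0 <= sup [set diam (Papprox S x (d n)) | x in X1] <= e.
  apply: sup_bnd0 => [|_ [x Xx <-]]; first exact: ltW.
  have x1 := X1_gt1 _ Xx.
  apply: sup_bnd0 => [|_ [a Pa [b Pb <-]]]; first exact: ltW.
  rewrite normr_ge0 /=.
  have ha := Hd x _ a x1 (HN n Nn) Pa.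
  have hb := Hd x _ b x1 (HN n Nn) Pb.
  apply: le_trans (ler_distD (w x) a b) _.
  rewrite (distrC (w x) b); lra.
by case/andP: hs => h1 h2; rewrite ger0_norm.
Qed.

Lemma item2_fwd (HM : @modUR R X) :
  (fun n => sup [set Num.norm (rsup (Papprox S x (d n)) (Papprox S x' (d n))
                                      - Num.norm ((Num.norm x)^-1 *: x - (Num.norm x')^-1 *: x'))
                                    | x in X1 & x' in X1]) @ \oo --> (0 : R).
Proof.
apply: cvg0_of => e e0.
have [d0 d00 Hd] := close_w HM _ (half_gt0 _ e0).
have [N HN] := dn_small _ d00.
exists N => n Nn.
set E := (X in sup X).
have hs : 0 <= sup E <= e.
  apply: sup_bnd0 => [|_ [x Xx [x' Xx' <-]]]; first exact: ltW.
  have x1 := X1_gt1 _ Xx; have x1' := X1_gt1 _ Xx'.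
  rewrite normr_ge0 /=.
  have hr : `|w x - w x'| <= rsup (Papprox S x (d n)) (Papprox S x' (d n)) <= `|w x - w x'| + e.
    apply: sup_bnd => [| _ [a Pa [b Pb <-]]].
      exists (w x); first by apply: w_in_P => //; exact: ltW (dn_gt0 n).
      exists (w x'); first by apply: w_in_P => //; exact: ltW (dn_gt0 n).
      by [].
    have ha := Hd x _ a x1 (HN n Nn) Pa.
    have hb := Hd x' _ b x1' (HN n Nn) Pb.
    apply: le_trans (ler_distD (w x) a b) _.
    apply: le_trans (lerD (lexx _) (ler_distD (w x') (w x) b)) _.
    rewrite (distrC (w x') b); lra.
  move: hr; set r := rsup _ _; set c := `|_ - _| => /andP[h1 h2].
  rewrite ger0_norm; [lra | by rewrite subr_ge0].
by case/andP: hs => h1 h2; rewrite ger0_norm.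
Qed.

Lemma haus3 (x : X) (dl : R) : 1 < `|x| -> 0 <= dl -> Pmetric S x = [set w x] ->
  [set r | 0 < r /\ Papprox S x dl `<=` enlarge (Pmetric S x) r /\
           Pmetric S x `<=` enlarge (Papprox S x dl) r] 3.
Proof.
move=> x1 dl0 Hx; have x0 : x != 0 by rewrite -normr_eq0 gt_eqF // (lt_trans ltr01).
split; first by [].
split.
  rewrite Hx; apply: enlarge_of => // z [z1 _].
  apply: le_trans (normS2 _ _ z1 (norm_w _ x0)) _; lra.
move=> z Pz; apply: enlarge_self; exact: Papprox_mono _ _ _ dl0 _ Pz.
Qed.

Lemma haus_bnd (x : X) (dl : R) : 1 < `|x| -> 0 <= dl -> Pmetric S x = [set w x] ->
  0 <= hausdorff (Papprox S x dl) (Pmetric S x) <= 3.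
Proof.
move=> x1 dl0 Hx; apply: inf_le_c; first exact: haus3.
by move=> r [r0 _]; exact: ltW.
Qed.

Lemma item4_fwd (HM : @modUR R X) :
  (forall x, X1 x -> Pmetric S x = [set `|x|^-1 *: x]) /\
  (fun n => sup [set hausdorff (Papprox S x (d n)) (Pmetric S x) | x in X1]) @ \oo --> (0 : R).
Proof.
split; first by move=> x Xx; apply: Pmetric_eq => //; exact: X1_gt1.
apply: cvg0_of => e e0.
have [d0 d00 Hd] := close_w HM _ e0.
have [N HN] := dn_small _ d00.
exists N => n Nn.
set E := (X in sup X).
have hs : 0 <= sup E <= e.
  apply: sup_bnd0 => [|_ [x Xx <-]]; first exact: ltW.
  have x1 := X1_gt1 _ Xx.
  apply: inf_le_c; last by move=> r [r0 _]; exact: ltW.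
  split; first by [].
  rewrite (Pmetric_eq HM x x1); split.
    by apply: enlarge_of => // z Pz; exact: Hd x _ z x1 (HN n Nn) Pz.
  move=> z /= ->; apply: enlarge_self; apply: w_in_P => //; exact: ltW (dn_gt0 n).
by case/andP: hs => h1 h2; rewrite ger0_norm.
Qed.

Lemma item5_fwd (HM : @modUR R X) : unif_strongly_chebyshev S X1.
Proof.
split.
  by move=> x Xx; exists (w x); apply: Pmetric_eq => //; exact: X1_gt1.
move=> e e0; have [d0 d00 Hd] := close_w HM _ e0.
exists d0 => // x Xx; have x1 := X1_gt1 _ Xx.
rewrite (Pmetric_eq HM x x1); apply: enlarge_of => // z Pz.
exact: Hd x _ z x1 (lexx _) Pz.
Qed.

End Items.
Arguments item2_fwd {R X}.
Arguments item3_fwd {R X}.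
Arguments item4_fwd {R X}.
Arguments item5_fwd {R X}.
Arguments haus3 {R X}.
Arguments haus_bnd {R X}.
Arguments half_gt0 {R}.

Section Back.
Variables (R : realType) (X : normedModType R).
Local Notation S := (@unit_sphere R X).
Local Notation w x := (`|x|^-1 *: x).
Local Notation d n := ((n.+1%:R : R)^-1).

Lemma pick_delta (dN : R) : 0 < dN -> exists2 dl : R, 0 < dl &
  forall u y : X, `|u| = 1 -> `|y| = 1 -> 2 - dl <= `|u + y| ->
  [/\ 1 < `|u + y|, Papprox S (u + y) dN u & Papprox S (u + y) dN y].
Proof.
move=> dN0; have h2 : (0 : R) < 2^-1 by rewrite invr_gt0 ltr0n.
exists (Num.min dN 2^-1); first by rewrite lt_min dN0 h2.
move=> u y u1 y1 h.
have m1 : Num.min dN 2^-1 <= dN by rewrite ge_min lexx.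
have m2 : Num.min dN 2^-1 <= 2^-1 by rewrite ge_min lexx orbT.
have x1 : 1 < `|u + y|.
  move: h m2; set m := Num.min _ _; set q := `|u + y| => h m2.
  have : 2^-1 < 1 :> R by rewrite invf_lt1 // ltr1n.
  lra.
have h' : 2 - dN <= `|u + y| by apply: le_trans h; rewrite lerD2l lerN2.
by have [Pu Py] := sum_in_P u y dN u1 y1 x1 h'.
Qed.

Lemma diam_le (A : set X) a b : A a -> A b -> A `<=` S -> `|a - b| <= diam A.
Proof.
move=> Aa Ab AS; apply: (le_sup_c _ 2); first by exists a => //; exists b.
move=> _ [p Ap [q Aq <-]]; apply: normS2; [exact: AS|exact: AS].
Qed.

Lemma diam_bnd (A : set X) : A `<=` S -> diam A <= 2.
Proof.
move=> AS; apply: sup_le_c => // _ [p Ap [q Aq <-]]; apply: normS2; [exact: AS|exact: AS].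
Qed.

Lemma PS (x : X) dl : Papprox S x dl `<=` S.
Proof. by move=> z []. Qed.

Lemma item3_bwd :
  (fun n => sup [set diam (Papprox S x (d n)) | x in X1]) @ \oo --> (0 : R) -> @modUR R X.
Proof.
move=> H e e0; have [N HN] := cvg0_ex _ H e e0; have hN := HN N (leqnn N).
have [dl dl0 Hdl] := pick_delta _ (dn_gt0 N).
exists dl => // u y u1 y1 h; have [x1 Pu Py] := Hdl u y u1 y1 h.
apply: le_trans (diam_le _ _ _ Pu Py (@PS _ _)) _.
apply: le_trans (ltW (le_lt_trans (ler_norm _) hN)).
apply: (le_sup_c _ 2); first by exists (u + y) => //; exact: gt1_X1.
move=> _ [x Xx <-]; exact: diam_bnd _ (@PS _ _).
Qed.

Lemma item2_bwd :
  (fun n => sup [set Num.norm (rsup (Papprox S x (d n)) (Papprox S x' (d n))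
                                      - Num.norm ((Num.norm x)^-1 *: x - (Num.norm x')^-1 *: x'))
                                    | x in X1 & x' in X1]) @ \oo --> (0 : R) -> @modUR R X.
Proof.
move=> H e e0; have [N HN] := cvg0_ex _ H e e0; have hN := HN N (leqnn N).
have [dl dl0 Hdl] := pick_delta _ (dn_gt0 N).
exists dl => // u y u1 y1 h; have [x1 Pu Py] := Hdl u y u1 y1 h.
apply: le_trans (diam_le _ _ _ Pu Py (@PS _ _)) _.
apply: le_trans (ltW (le_lt_trans (ler_norm _) hN)).
have Xx := gt1_X1 _ x1.
apply: le_trans (ler_norm _) _.
have -> : diam (Papprox S (u + y) (d N)) =
  rsup (Papprox S (u + y) (d N)) (Papprox S (u + y) (d N)) - `|w (u + y) - w (u + y)|.
  by rewrite subrr normr0 subr0.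
apply: (le_sup_c _ 4); first by exists (u + y) => //; exists (u + y).
move=> _ [x Xx' [x' Xx'' <-]].
have x0 : x != 0 by rewrite -normr_eq0 gt_eqF // (lt_trans ltr01) // X1_gt1.
have x0' : x' != 0 by rewrite -normr_eq0 gt_eqF // (lt_trans ltr01) // X1_gt1.
have hc := normS2 _ _ (norm_w _ x0) (norm_w _ x0').
have hc0 := normr_ge0 (w x - w x').
have /andP[hr0 hr] : 0 <= rsup (Papprox S x (d N)) (Papprox S x' (d N)) <= 2.
  apply: sup_bnd0 => // _ [a [a1 _] [b [b1 _] <-]].
  by rewrite normr_ge0 normS2.
move: hc hc0 hr0 hr; set r := rsup _ _; set c := `|_ - _| => hc hc0 hr0 hr.
rewrite ler_norml; apply/andP; split; lra.
Qed.

Lemma item4_bwd :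
  ((forall x, X1 x -> Pmetric S x = [set `|x|^-1 *: x]) /\
  (fun n => sup [set hausdorff (Papprox S x (d n)) (Pmetric S x) | x in X1]) @ \oo --> (0 : R))
  -> @modUR R X.
Proof.
move=> [H1 H] e e0; have [N HN] := cvg0_ex _ H _ (half_gt0 _ e0); have hN := HN N (leqnn N).
have [dl dl0 Hdl] := pick_delta _ (dn_gt0 N).
exists dl => // u y u1 y1 h; have [x1 Pu Py] := Hdl u y u1 y1 h.
have Xx := gt1_X1 _ x1.
have hH : hausdorff (Papprox S (u + y) (d N)) (Pmetric S (u + y)) < e / 2.
  apply: le_lt_trans (le_lt_trans (ler_norm _) hN).
  apply: (le_sup_c _ 3); first by exists (u + y).
  move=> _ [x Xx' <-]; have x1' := X1_gt1 _ Xx'.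
  by have /andP[] := haus_bnd x (d N) x1' (ltW (dn_gt0 N)) (H1 x Xx').
have [r [r0 [sub _]] rlt] := inf_lt (ex_intro _ 3 (haus3 _ _ x1 (ltW (dn_gt0 N)) (H1 _ Xx))) hH.
rewrite H1 // in sub.
have hu := enlarge_single _ _ _ (ltW r0) (sub _ Pu).
have hy := enlarge_single _ _ _ (ltW r0) (sub _ Py).
apply: le_trans (ler_distD (w (u + y)) u y) _.
rewrite (distrC (w (u + y)) y); lra.
Qed.

Lemma item5_bwd : unif_strongly_chebyshev S X1 -> @modUR R X.
Proof.
move=> [Hs Hd] e e0; have [d0 d00 Hd0] := Hd _ (half_gt0 _ e0).
have [dl dl0 Hdl] := pick_delta _ d00.
exists dl => // u y u1 y1 h; have [x1 Pu Py] := Hdl u y u1 y1 h.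
have Xx := gt1_X1 _ x1.
have [a Ha] := Hs _ Xx.
have := Hd0 _ Xx u Pu; rewrite Ha => /(enlarge_single _ _ _ (ltW (half_gt0 _ e0))) hu.
have := Hd0 _ Xx y Py; rewrite Ha => /(enlarge_single _ _ _ (ltW (half_gt0 _ e0))) hy.
apply: le_trans (ler_distD a u y) _.
rewrite (distrC a y); lra.
Qed.

End Back.
Arguments item2_bwd {R X}.
Arguments item3_bwd {R X}.
Arguments item4_bwd {R X}.
Arguments item5_bwd {R X}.

Theorem corollary3p10 (R : realType) (X : completeNormedModType R) :
  let S := @unit_sphere R X in
  let X_1 := @X1 R X in
  let d (n : nat) : R := (n.+1%:R)^-1 in
  [/\ (@UR R X <-> (fun n => sup [set Num.norm (rsup (Papprox S x (d n)) (Papprox S x' (d n))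
                                      - Num.norm ((Num.norm x)^-1 *: x - (Num.norm x')^-1 *: x'))
                                    | x in X_1 & x' in X_1]) @ \oo --> (0 : R)),
      (@UR R X <-> (fun n => sup [set diam (Papprox S x (d n)) | x in X_1])
                     @ \oo --> (0 : R)),
      (@UR R X <-> ((forall x, X_1 x -> Pmetric S x = [set `|x|^-1 *: x]) /\
                    (fun n => sup [set hausdorff (Papprox S x (d n)) (Pmetric S x)
                                  | x in X_1]) @ \oo --> (0 : R)))
    & (@UR R X <-> unif_strongly_chebyshev S X_1)].
Proof.
move=> S X_1 d; split; split.
- by move/UR_mod; exact: item2_fwd.
- by move=> h; apply/UR_mod; exact: item2_bwd.
- by move/UR_mod; exact: item3_fwd.
- by move=> h; apply/UR_mod; exact: item3_bwd.
- by move/UR_mod; exact: item4_fwd.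
- by move=> h; apply/UR_mod; exact: item4_bwd.
- by move/UR_mod; exact: item5_fwd.
- by move=> h; apply/UR_mod; exact: item5_bwd.
Qed.
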